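(* Let $y$ be a string whose last character occurs nowhere else in $y$, and let $\mathrm{BT}(y)$ be the trie consisting only of the black nodes of $\mathrm{AST}(y)$ (i.e., the trie of the set $\mathcal{R}$). Then every leaf $\ell$ of $\mathrm{BT}(y)$ is a node of the suffix tree $\mathrm{ST}(y)$, i.e., $\ell\in\mathcal{L}$.
   Context: $\mathrm{Substr}(y)$ is the set of substrings of $y$. $\mathrm{BegPos}(x)=\{i\mid y[i..i+|x|-1]=x\}$, $\mathrm{EndPos}(x)=\{i\mid y[i-|x|+1..i]=x\}$. For $x\in\mathrm{Substr}(y)$, $\overrightarrow{x}$ is the longest $z$ with $\mathrm{BegPos}(z)=\mathrm{BegPos}(x)$ and $\overleftarrow{x}$ is the longest $z$ with $\mathrm{EndPos}(z)=\mathrm{EndPos}(x)$. $\mathcal{L}=\{\overrightarrow{x}\mid x\in\mathrm{Substr}(y)\}$ is the node set of the suffix tree $\mathrm{ST}(y)$, and $\mathcal{R}=\{\overleftarrow{x}\mid x\in\mathrm{Substr}(y)\}$. $\mathrm{AST}(y)$ is the rooted tree on node set $\mathcal{L}\cup\mathcal{R}$ in which the parent of each non-root node is its longest proper prefix in $\mathcal{L}\cup\mathcal{R}$; a node is black iff it belongs to $\mathcal{R}$. The set $\mathcal{R}$ is prefix-closed, and a leaf of $\mathrm{BT}(y)$ is an element of $\mathcal{R}$ that is not a proper prefix of any other element of $\mathcal{R}$. *)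

(* Defs.v *)
From mathcomp Require Import all_boot.
Set Implicit Arguments. Unset Strict Implicit. Unset Printing Implicit Defensive.

Section Strings.
Variable T : eqType.
Variable y : seq T.

(* 0-indexed: x occurs in y starting at position i *)
Definition occ_at (x : seq T) (i : nat) : bool :=
  (i + size x <= size y) && (take (size x) (drop i y) == x).

Definition BegPos (x : seq T) : nat -> bool := fun i => occ_at x i.

(* EndPos x = { i | y[i-|x|+1..i] = x }; in 0-indexed form, the occurrence
   ends at position i, i.e. starts at i + 1 - |x|. We use the "exclusive end"
   index j = i+1 to accommodate the empty string: j \in EndPosX x iff
   |x| <= j and x occurs starting at j - |x|. *)
Definition EndPos (x : seq T) : nat -> bool :=
  fun j => (size x <= j) && occ_at x (j - size x).

Definition is_substr (x : seq T) : Prop := exists i, occ_at x i.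

Definition is_right_ext (x z : seq T) : Prop :=
  (forall i, BegPos z i = BegPos x i) /\
  (forall w, (forall i, BegPos w i = BegPos x i) -> size w <= size z).

Definition is_left_ext (x z : seq T) : Prop :=
  (forall i, EndPos z i = EndPos x i) /\
  (forall w, (forall i, EndPos w i = EndPos x i) -> size w <= size z).

(* L: node set of the suffix tree ST(y) *)
Definition inL (z : seq T) : Prop := exists x, is_substr x /\ is_right_ext x z.
(* R: black nodes *)
Definition inR (z : seq T) : Prop := exists x, is_substr x /\ is_left_ext x z.

Definition proper_prefix (u v : seq T) : Prop :=
  size u < size v /\ prefix u v.

Definition BT_leaf (z : seq T) : Prop :=
  inR z /\ forall w, inR w -> ~ proper_prefix z w.

End Strings.

(* Main.v *)
Require Import Defs.
From mathcomp Require Import all_boot.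
From mathcomp Require Import zify.

Section H.
Variable T : eqType.
Variable y : seq T.

Lemma occ_cat (u v : seq T) i :
  occ_at y (u ++ v) i = occ_at y u i && occ_at y v (i + size u).
Proof.
rewrite /occ_at size_cat takeD drop_drop (addnC (size u) i).
have [H|H] := leqP (i + (size u + size v)) (size y).
- have Hs : size (take (size u) (drop i y)) = size u.
    rewrite size_take size_drop; case: ltnP => //; lia.
  rewrite eqseq_cat //.
  have -> : (i + size u <= size y) = true by lia.
  have -> : (i + size u + size v <= size y) = true by lia.
  by [].
- have -> : (i + size u + size v <= size y) = false by lia.
  by rewrite !andbF.
Qed.

Lemma occ_uniq (a b : seq T) i :
  occ_at y a i -> occ_at y b i -> size a = size b -> a = b.
Proof. by rewrite /occ_at => /andP[_ /eqP Ha] /andP[_ /eqP Hb] E; rewrite -Ha -Hb E. Qed.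

End H.
Arguments occ_uniq {T y a b i}.

Theorem lemma5 (T : eqType) (s : seq T) (c : T) :
  c \notin s ->
  forall l : seq T, BT_leaf (rcons s c) l -> inL (rcons s c) l.
Proof.
move=> _ z [[x [[i0 Hx0] [HzE Hzmax]]] Hleaf].
set y := rcons s c in HzE Hzmax Hleaf Hx0 *.
have Hzocc : occ_at y z (i0 + size x - size z).
  have := HzE (i0 + size x); rewrite /EndPos addnK Hx0 leq_addl /=.
  by move/andP=> [].
exists z; split; first by exists (i0 + size x - size z).
split=> // w Hw.
rewrite leqNgt; apply/negP => Hlt.
set j := i0 + size x - size z in Hzocc.
have Hwj : occ_at y w j by have := Hw j; rewrite /BegPos => ->.
have Hwz : w = z ++ drop (size z) w.
  rewrite -{1}(cat_take_drop (size z) w); congr (_ ++ _).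
  have := Hwj; rewrite -{1}(cat_take_drop (size z) w) occ_cat => /andP[H1 _].
  apply: (occ_uniq H1 Hzocc).
  by rewrite size_take Hlt.
case Ed: (drop (size z) w) Hwz => [|a r] Hwz.
  by move: Hlt; rewrite Hwz cats0 ltnn.
set u := z ++ [:: a].
have HA : forall i, occ_at y u i = occ_at y z i.
  move=> i; apply/idP/idP.
    by rewrite occ_cat => /andP[].
  move=> Hz; have := Hw i; rewrite /BegPos Hz => Hwi.
  by move: Hwi; rewrite Hwz -cat1s catA occ_cat => /andP[].
apply: (Hleaf u); last first.
  split; first by rewrite /u size_cat addn1.
  by rewrite /u prefix_prefix.
exists u; split; first by exists j; rewrite HA.
split=> // v Hv.
rewrite leqNgt; apply/negP => Hlt2.
have Hu1 : EndPos y u (j + size u) by rewrite /EndPos leq_addl addnK HA.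
have := Hv (j + size u); rewrite Hu1 /EndPos => /andP[Hsv Hocv].
set v'' := take (size v - size u) v.
have Hsv'' : size v'' = size v - size u.
  by rewrite size_take; case: ltnP => //; lia.
have Hvd : drop (size v - size u) v = u.
  rewrite -(cat_take_drop (size v - size u) v) occ_cat in Hocv.
  case/andP: Hocv => _ H2.
  rewrite cat_take_drop -/v'' Hsv'' in H2.
  apply: (occ_uniq H2); last by rewrite size_drop; lia.
  by rewrite (_ : _ + _ = j) ?HA //; lia.
have Hv' : v = (v'' ++ z) ++ [:: a].
  by rewrite -catA -/u -Hvd cat_take_drop.
have Hsu : size u = (size z).+1 by rewrite /u size_cat addn1.
suff HE : forall k, EndPos y (v'' ++ z) k = EndPos y x k.
  have := Hzmax _ HE; rewrite size_cat; lia.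
move=> k; rewrite -HzE /EndPos; apply/idP/idP.
- case/andP=> H1 H2; move: H2; rewrite occ_cat => /andP[_ H2].
  rewrite size_cat in H1; rewrite (_ : size z <= k) /=; last by lia.
  by rewrite (_ : k - size z = k - size (v'' ++ z) + size v'') // size_cat; lia.
- case/andP=> H1 H2; rewrite -HA in H2.
  have := Hv k.+1; rewrite /EndPos Hsu subSS ltnS H1 H2 /= => /andP[H3 H4].
  move: H4; rewrite {1}Hv' occ_cat => /andP[H4 _].
  move: H3; rewrite Hv' !size_cat /= => H3.
  have -> : (size v'' + size z <= k) = true by lia.
  have Hs : size v = size v'' + size z + 1 by rewrite {1}Hv' !size_cat.
  by rewrite /= (_ : k - _ = k.+1 - size v) //; lia.
Qed.
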